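(* Let $G=(V,E)$ be a finite graph, $f$ a weight function of one of the two types described in the context (with associated integer $k$), $g(S)=f(S)/|S|$, $\epsilon\ge 0$, and let $S^*$ be a nonempty vertex set maximizing $g$ over nonempty subsets of $V$. Run the local-peeling-optimization algorithm described in the context, and let $u_i$ be the first vertex of $S^*$ that the algorithm removes. Then $u_i$ is not removed during a local trimming step (i.e., it is not in any set $U_2$); it is removed in a main peeling step (in some set $U_1$).
   Context: Let $G=(V,E)$ be a graph; $E[S]$ denotes the edges with both endpoints in $S$. The weight function $f$ is either (Type A, $k=2$) $f(S)=\sum_{u_i\in S}a_i+\sum_{(u_i,u_j)\in E[S]}c_{ij}$ with fixed $a_i\ge 0$, $c_{ij}\ge 0$, or (Type B, $k\ge3$) $f(S)=$ number of $k$-cliques in the induced subgraph $G[S]$. The density is $g(S)=f(S)/|S|$ for nonempty $S$, and the peeling weight of $u\in S$ is $w_u(S)=f(S)-f(S\setminus\{u\})$. Local-peeling-optimization algorithm with parameter $\epsilon\ge0$: set $S_0=V$, $\tau_{\max}=0$, $i=1$. While $S_{i-1}\neq\emptyset$: (1) set $\tau_{\max}\leftarrow\max\{\tau_{\max}, g(S_{i-1})/(k(1+\epsilon))\}$ and $\tau_1=\max\{\tau_{\max},k(1+\epsilon)g(S_{i-1})\}$; (2) main peeling step: $U_1=\{u\in S_{i-1}: w_u(S_{i-1})\le\tau_1\}$, $S_i\leftarrow S_{i-1}\setminus U_1$; (3) local trimming: while there exists $u\in S_i$ with $w_u(S_i)<g(S_i)$, set $\tau_2=\max\{\tau_{\max},g(S_i)\}$,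 $U_2=\{u\in S_i: w_u(S_i)<\tau_2\}$, and $S_i\leftarrow S_i\setminus U_2$; (4) increase $i$ by one. The output is $\arg\max_{S_i}g(S_i)$ over the nonempty sets produced. *)

(* Defs.v *)
From HB Require Import structures.
From mathcomp Require Import all_boot all_order all_algebra.
Set Implicit Arguments. Unset Strict Implicit. Unset Printing Implicit Defensive.
Import Order.TTheory GRing.Theory Num.Theory.
Local Open Scope ring_scope.

Section Peeling.
Variables (R : realFieldType) (T : finType).

Definition is_clique (e : rel T) (C : {set T}) : bool :=
  [forall x in C, forall y in C, (x != y) ==> e x y].

Definition is_edge (e : rel T) (E : {set T}) : bool :=
  (#|E| == 2)%N && is_clique e E.

(* The two types of weight functions.
   TypeA a c : f(S) = sum_{u in S} a u + sum_{edges E of G[S]} c E   (k = 2)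
   TypeB k   : f(S) = number of k-cliques of G[S]                    (k >= 3) *)
Inductive wfun :=
  | TypeA of (T -> R) & ({set T} -> R)
  | TypeB of nat.

Definition wk (w : wfun) : nat :=
  match w with TypeA _ _ => 2%N | TypeB k => k end.

Definition valid_wfun (e : rel T) (w : wfun) : Prop :=
  match w with
  | TypeA a c => (forall u, 0 <= a u) /\ (forall E, is_edge e E -> 0 <= c E)
  | TypeB k => (3 <= k)%N
  end.

Definition fw (e : rel T) (w : wfun) (S : {set T}) : R :=
  match w with
  | TypeA a c => \sum_(u in S) a u + \sum_(E : {set T} | is_edge e E && (E \subset S)) c E
  | TypeB k => #|[set C : {set T} | (C \subset S) && (#|C| == k) && is_clique e C]|%:R
  end.

(* density g(S) = f(S)/|S| (only meaningful for nonempty S) *)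
Definition gw (e : rel T) (w : wfun) (S : {set T}) : R := fw e w S / #|S|%:R.

Definition pw (e : rel T) (w : wfun) (u : T) (S : {set T}) : R :=
  fw e w S - fw e w (S :\ u).

(* An event of the algorithm: (true, U1) for a main peeling step,
   (false, U2) for a local trimming step. *)
Definition event := (bool * {set T})%type.

Fixpoint trim (e : rel T) (w : wfun) (fuel : nat) (S : {set T}) (tmax : R)
  : seq event * {set T} :=
  match fuel with
  | 0%N => ([::], S)
  | n.+1 =>
    if [exists u in S, pw e w u S < gw e w S] then
      let U2 := [set u in S | pw e w u S < Num.max tmax (gw e w S)] in
      let r := trim e w n (S :\: U2) tmax in
      ((false, U2) :: r.1, r.2)
    else ([::], S)
  end.

(* Main loop; each iteration removes at least one vertex, so fuel #|T|.+1
   for both loops is sufficient for the run to reach the empty set. *)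
Fixpoint run (e : rel T) (w : wfun) (eps : R) (fuel : nat) (S : {set T}) (tmax : R)
  : seq event :=
  match fuel with
  | 0%N => [::]
  | n.+1 =>
    if S == set0 then [::] else
    let kk := (wk w)%:R * (1 + eps) in
    let tmax' := Num.max tmax (gw e w S / kk) in
    let t1 := Num.max tmax' (kk * gw e w S) in
    let U1 := [set u in S | pw e w u S <= t1] in
    let r := trim e w #|T|.+1 (S :\: U1) tmax' in
    (true, U1) :: r.1 ++ run e w eps n r.2 tmax'
  end.

Definition lpo_events (e : rel T) (w : wfun) (eps : R) : seq event :=
  run e w eps #|T|.+1 [set: T] 0.

End Peeling.

(* Main.v *)
Require Import Defs.
From HB Require Import structures.
From mathcomp Require Import all_boot all_order all_algebra.
Import Order.TTheory GRing.Theory Num.Theory.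
Local Open Scope ring_scope.
Set Implicit Arguments. Unset Strict Implicit. Unset Printing Implicit Defensive.

Section Cnt.
Variables (R : realFieldType) (T : finType).
Variables (P : pred {set T}) (F : {set T} -> R).
Hypothesis F_ge0 : forall X, P X -> 0 <= F X.

Definition cnt (S : {set T}) := \sum_(X : {set T} | P X && (X \subset S)) F X.

Lemma cnt_ge0 (S : {set T}) : 0 <= cnt S.
Proof. by apply: sumr_ge0 => X /andP[/F_ge0]. Qed.

Lemma cnt_diff (S : {set T}) u : cnt S - cnt (S :\ u) =
  \sum_(X : {set T} | P X && (X \subset S) && (u \in X)) F X.
Proof.
rewrite /cnt (bigID (fun X : {set T} => u \in X) (fun X : {set T} => P X && (X \subset S))) /=.
have -> : \sum_(X | P X && (X \subset S :\ u)) F X =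
          \sum_(X | P X && (X \subset S) && (u \notin X)) F X.
  by apply: eq_bigl => X; rewrite subsetD1 andbA.
by rewrite addrK.
Qed.

Lemma cnt_diff_mono (S1 S2 : {set T}) u : S1 \subset S2 ->
  cnt S1 - cnt (S1 :\ u) <= cnt S2 - cnt (S2 :\ u).
Proof.
move=> sub; rewrite !cnt_diff.
rewrite [X in _ <= X](bigID (fun X : {set T} => X \subset S1)) /=.
have -> : \sum_(X | P X && (X \subset S2) && (u \in X) && (X \subset S1)) F X =
          \sum_(X | P X && (X \subset S1) && (u \in X)) F X.
  apply: eq_bigl => X.
  case: (boolP (X \subset S1)) => h; last by rewrite !andbF andbC /= !andbF.
  by rewrite (subset_trans h sub) !andbT.
rewrite lerDl; apply: sumr_ge0 => X /andP[/andP[/andP[/F_ge0]]] //.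
Qed.

Lemma cnt_sum (S : {set T}) : \sum_(u in S) (cnt S - cnt (S :\ u)) =
  \sum_(X : {set T} | P X && (X \subset S)) (#|X|%:R * F X).
Proof.
under eq_bigr => u _ do rewrite cnt_diff big_mkcond.
rewrite exchange_big /= [RHS]big_mkcond /=; apply: eq_bigr => X _.
case: (boolP (P X && (X \subset S))) => /= h; last first.
  by rewrite big1 // => u _; rewrite (negbTE h).
case/andP: h => _ sub.
rewrite mulr_natl -sumr_const [RHS]big_mkcond [LHS]big_mkcond /=.
apply: eq_bigr => i _.
case: (boolP (i \in X)) => hi; last by case: (i \in S).
by rewrite (subsetP sub _ hi).
Qed.

Lemma cnt_sum_le (k : nat) (S : {set T}) : (forall X, P X -> #|X| <= k)%N ->
  \sum_(u in S) (cnt S - cnt (S :\ u)) <= k%:R * cnt S.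
Proof.
move=> hk; rewrite cnt_sum /cnt mulr_sumr; apply: ler_sum => X /andP[hP _].
by apply: ler_wpM2r; [exact: F_ge0 | rewrite ler_nat hk].
Qed.

Lemma cnt0 : (~~ P set0) -> cnt set0 = 0.
Proof.
move=> hP; rewrite /cnt big1 // => X /andP[hX]; rewrite subset0 => /eqP hX0.
by move: hX; rewrite hX0 (negbTE hP).
Qed.
End Cnt.

Section FW.
Variables (R : realFieldType) (T : finType) (e : rel T) (w : wfun R T).
Hypothesis w_valid : valid_wfun e w.

Lemma fwB k S : fw e (@TypeB R T k) S =
  cnt (fun C : {set T} => (#|C| == k) && is_clique e C) (fun _ => (1:R)) S.
Proof.
rewrite /fw /cnt -sumr_const; apply: eq_bigl => C; rewrite inE.
by case: (C \subset S); case: (_ == _); case: is_clique.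
Qed.

Lemma fwA (a : T -> R) c S : fw e (TypeA a c) S = \sum_(u in S) a u + cnt (is_edge e) c S.
Proof. by []. Qed.

Lemma asum_diff (a : T -> R) (S : {set T}) u : u \in S ->
  \sum_(v in S) a v - \sum_(v in S :\ u) a v = a u.
Proof. by move=> uS; rewrite (big_setD1 _ uS) /= addrK. Qed.

Lemma subDD (x y z t : R) : (x + y) - (z + t) = (x - z) + (y - t).
Proof. by rewrite opprD addrACA. Qed.

Lemma fw0 : fw e w set0 = 0.
Proof.
case: w w_valid => [a c [ha hc] | k hk].
  rewrite fwA big_set0 add0r cnt0 // /is_edge cards0 //.
rewrite fwB cnt0 //= cards0; case: k hk => //.
Qed.

Lemma fw_ge0 (S : {set T}) : 0 <= fw e w S.
Proof.
case: w w_valid => [a c [ha hc] | k hk].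
  rewrite fwA; apply: addr_ge0; [by apply: sumr_ge0 | exact: cnt_ge0].
by rewrite /fw ler0n.
Qed.

Lemma pw_mono (S1 S2 : {set T}) u : u \in S1 -> S1 \subset S2 ->
  pw e w u S1 <= pw e w u S2.
Proof.
move=> uS1 sub; have uS2 := subsetP sub _ uS1.
case: w w_valid => [a c [ha hc] | k hk].
  rewrite /pw !fwA.
  rewrite !subDD.
  rewrite !asum_diff // lerD2l.
  exact: cnt_diff_mono.
by rewrite /pw !fwB; apply: cnt_diff_mono.
Qed.

Lemma pw_sum (S : {set T}) : \sum_(u in S) pw e w u S <= (wk w)%:R * fw e w S.
Proof.
case: w w_valid => [a c [ha hc] | k hk]; rewrite [wk _]/=.
  rewrite /pw.
  under eq_bigr => u uS do rewrite !fwA subDD asum_diff //.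
  rewrite big_split /= -/(cnt (is_edge e) c S) mulrDr.
  apply: lerD.
    rewrite -[X in X <= _]mul1r; apply: ler_wpM2r; last by rewrite ler1n.
    by apply: sumr_ge0.
  apply: cnt_sum_le => // X /andP[/eqP -> _] //.
rewrite /pw; under eq_bigr => u uS do rewrite !fwB.
rewrite fwB; apply: cnt_sum_le => // X /andP[/eqP -> _] //.
Qed.
End FW.

Section Main.
Variables (R : realFieldType) (T : finType) (e : rel T)
  (w : wfun R T) (w_valid : valid_wfun e w)
  (eps : R) (eps_ge0 : 0 <= eps)
  (Sstar : {set T}) (Sstar_ne : Sstar != set0)
  (Sstar_max : forall S : {set T}, S != set0 -> gw e w S <= gw e w Sstar).

Let gs := gw e w Sstar.
Let kk := (wk w)%:R * (1 + eps) : R.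

Lemma gs_ge0 : 0 <= gs.
Proof. by rewrite /gs /gw divr_ge0 ?ler0n // fw_ge0. Qed.

Lemma gw_le (S : {set T}) : gw e w S <= gs.
Proof.
case: (eqVneq S set0) => [->|h]; last exact: Sstar_max.
by rewrite /gw fw0 // mul0r gs_ge0.
Qed.

Lemma fw_le (S : {set T}) : fw e w S <= gs * #|S|%:R.
Proof.
case: (eqVneq S set0) => [->|h]; first by rewrite fw0 // cards0 mulr0.
have n0 : (#|S|%:R : R) != 0.
  by rewrite pnatr_eq0 -lt0n card_gt0.
rewrite -ler_pdivrMr; first exact: (Sstar_max h).
by rewrite ltr0n card_gt0.
Qed.

Lemma pw_star u : u \in Sstar -> gs <= pw e w u Sstar.
Proof.
move=> uS.
have n0 : (#|Sstar|%:R : R) != 0 by rewrite pnatr_eq0 -lt0n card_gt0.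
have hf : fw e w Sstar = gs * #|Sstar|%:R by rewrite /gs /gw divfK.
rewrite /pw hf (cardsD1 u Sstar) uS natrD mulrDr mulr1 -addrA lerDl subr_ge0.
exact: fw_le.
Qed.

Lemma pw_big (S : {set T}) u : Sstar \subset S -> u \in Sstar -> gs <= pw e w u S.
Proof. by move=> sub uS; apply: le_trans (pw_star uS) (pw_mono w_valid uS sub). Qed.

Lemma wk_ge2 : (2 <= wk w)%N.
Proof. by case: w w_valid => //= k hk; apply: leq_trans hk. Qed.

Lemma kk_ge1 : 1 <= kk.
Proof.
have h1 : 1 <= (wk w)%:R :> R by rewrite ler1n; apply: leq_trans wk_ge2.
have h2 : 1 <= 1 + eps by rewrite lerDl.
by have := ler_pM ler01 ler01 h1 h2; rewrite mulr1.
Qed.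

Lemma exists_small (S : {set T}) : S != set0 -> exists2 u, u \in S & pw e w u S <= kk * gw e w S.
Proof.
move=> hS.
case: (boolP [exists u in S, pw e w u S <= kk * gw e w S]) => [/exists_inP//|/exists_inPn h].
exfalso.
have [u uS] := set0Pn _ hS.
have lt : \sum_(v in S) (kk * gw e w S) < \sum_(v in S) pw e w v S.
  apply: ltr_sum; first by apply/hasP; exists u => //; rewrite mem_index_enum.
  by move=> v vS; rewrite ltNge h.
have := pw_sum w_valid S; rewrite leNgt => /negP; apply.
apply: le_lt_trans lt; rewrite sumr_const -[_ *+ #|S|]mulr_natr.
have n0 : (#|S|%:R : R) != 0 by rewrite pnatr_eq0 -lt0n card_gt0.
have -> : fw e w S = gw e w S * #|S|%:R by rewrite /gw divfK.
have g0 : 0 <= gw e w S by rewrite /gw divr_ge0 ?ler0n // fw_ge0.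
rewrite mulrA ler_wpM2r // ler_wpM2r //.
by rewrite /kk ler_peMr // lerDl.
Qed.

Lemma trim_ok n (S : {set T}) tmax : Sstar \subset S -> tmax <= gs ->
  [&& all (fun ev : event T => [disjoint ev.2 & Sstar]) (trim e w n S tmax).1,
      Sstar \subset (trim e w n S tmax).2 &
      (trim e w n S tmax).2 \subset S].
Proof.
elim: n S => [|n IH] S sub ht /=; first by rewrite sub subxx.
case: ifP => _ /=; last by rewrite sub subxx.
set U2 := [set u in S | _].
have dis : [disjoint U2 & Sstar].
  rewrite disjoint_subset; apply/subsetP => u; rewrite inE => /andP[uS hlt].
  rewrite inE; apply/negP => uSs.
  move: hlt; rewrite ltNge => /negP; apply.
  rewrite ge_max (le_trans ht (pw_big sub uSs)) /=.
  exact: le_trans (gw_le S) (pw_big sub uSs).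
have sub2 : Sstar \subset S :\: U2.
  apply/subsetP => x xS; rewrite inE (subsetP sub _ xS) andbT.
  by apply/negP => xU; move: (disjointFr dis xU); rewrite xS.
case/and3P: (IH _ sub2 ht) => -> -> h3 /=; rewrite dis /=.
by apply: subset_trans h3 _; apply: subsetDl.
Qed.

Definition good (evs : seq (event T)) :=
  exists i : nat,
    [/\ (i < size evs)%N,
        (nth (true, set0) evs i).1 = true,
        ~~ [disjoint (nth (true, set0) evs i).2 & Sstar] &
        forall j : nat, (j < i)%N -> [disjoint (nth (true, set0) evs j).2 & Sstar]].

Lemma run_ok n (S : {set T}) tmax : Sstar \subset S -> tmax <= gs ->
  (#|S| < n)%N -> good (run e w eps n S tmax).
Proof.
elim: n S tmax => [|n IH] S tmax sub ht hn //; cbn [run].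
have -> : (S == set0) = false.
  apply/negP => /eqP S0; move: Sstar_ne; rewrite -subset0.
  by rewrite -S0 sub.
have hS : S != set0 by apply/negP => /eqP S0; move: Sstar_ne; rewrite -subset0 -S0 sub.
set tmax' := Num.max tmax _.
set t1 := Num.max tmax' _.
set U1 := [set u in S | _].
set r := trim e w #|T|.+1 (S :\: U1) tmax'.
case: (boolP [disjoint U1 & Sstar]) => dis; last first.
  by exists 0%N; split.
have ht' : tmax' <= gs.
  rewrite ge_max ht /=.
  have k0 : 0 < (wk w)%:R * (1 + eps) by apply: lt_le_trans kk_ge1.
  rewrite ler_pdivrMr //; apply: le_trans (gw_le S) _.
  by rewrite ler_peMr ?gs_ge0 // kk_ge1.
have sub1 : Sstar \subset S :\: U1.
  apply/subsetP => x xS; rewrite inE (subsetP sub _ xS) andbT.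
  by apply/negP => xU; move: (disjointFr dis xU); rewrite xS.
case/and3P: (trim_ok #|T|.+1 sub1 ht') => hall sub2 sub3.
have hlt : (#|r.2| < n)%N.
  have [u uS hu] := exists_small hS.
  have : (#|S :\: U1| < #|S|)%N.
    apply: proper_card; apply/properP; split; first exact: subsetDl.
    exists u => //; rewrite inE uS andbT negbK inE uS /=.
    apply: le_trans hu _; rewrite /t1 le_max; apply/orP; right; exact: lexx.
  move=> h; have := subset_leq_card sub3; move: hn; rewrite -/r.
  clear -h; move=> hn h2. 
  by rewrite ltnS in hn; exact: leq_trans (leq_ltn_trans h2 h) hn.
have [i [hi1 hi2 hi3 hi4]] := IH _ _ sub2 ht' hlt.
have hlt0 : (size r.1 + i < size r.1)%N = false by rewrite ltnNge leq_addr.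
exists (size r.1 + i).+1; rewrite /= !nth_cat hlt0 addKn size_cat.
split => //; first by rewrite ltnS ltn_add2l.
case=> [|j] //=; rewrite ltnS nth_cat => hj.
case: ifP => hj2; first by move/allP: hall; apply; apply: mem_nth.
apply: hi4; rewrite -(ltn_add2l (size r.1)) subnKC //.
by rewrite leqNgt hj2.
Qed.

End Main.

Theorem lemma5p4 (R : realFieldType) (T : finType) (e : rel T)
  (e_sym : symmetric e) (e_irr : irreflexive e)
  (w : wfun R T) (w_valid : valid_wfun e w)
  (eps : R) (eps_ge0 : 0 <= eps)
  (Sstar : {set T}) (Sstar_ne : Sstar != set0)
  (Sstar_max : forall S : {set T}, S != set0 -> gw e w S <= gw e w Sstar) :
  let evs := lpo_events e w eps in
  exists i : nat,
    [/\ (i < size evs)%N,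
        (nth (true, set0) evs i).1 = true,
        ~~ [disjoint (nth (true, set0) evs i).2 & Sstar] &
        forall j : nat, (j < i)%N -> [disjoint (nth (true, set0) evs j).2 & Sstar]].
Proof.
move=> evs.
have := @run_ok R T e w w_valid eps eps_ge0 Sstar Sstar_ne Sstar_max #|T|.+1 [set: T] 0.
rewrite /good; apply.
- exact: subsetT.
- by rewrite /gw divr_ge0 ?ler0n // fw_ge0.
- by rewrite cardsT.
Qed.
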